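(* Let $h\in D$ be a fixed energy level and let $z_0\in\Gamma_0\cap M_h$, where $M_h=\{H_0=h\}$. Then: (i) the angle mismatch $\theta^s(z_0)-\theta^u(z_0)$ is a constant depending only on $h$ (denote it $\theta^s(h)-\theta^u(h)$); (ii) the scattering map $\sigma_0$ associated to $\Gamma_0$ is given, in the action-angle coordinates $(I,\theta)$ on $\Lambda_0$, by $\sigma_0(I,\theta)=(I,\theta+\Delta(I))$, where $\Delta(I)=\theta^s(h)-\theta^u(h)$ for $I=I_h$.
   Context: $(M,\Omega)$ is a real-analytic symplectic manifold; $H_0$ real-analytic with Hamiltonian flow $\Phi^t_0$. There is a saddle-center equilibrium $L$ and a family of Lyapunov periodic orbits $\lambda_0(h)\subset\{H_0=h\}$; $\Lambda_0=\bigcup_{h\in D}\lambda_0(h)$ ($D$ a closed interval) is a 2-dimensional normally hyperbolic invariant manifold with boundary, parametrized by symplectic action-angle coordinates $(I,\theta)$, with $\lambda_0(h)=\{I=I_h\}$ and the flow on each $\lambda_0(h)$ a rigid rotation in $\theta$. For $z$ in the unstable (resp. stable) manifold $W^u(\Lambda_0)$ (resp. $W^s(\Lambda_0)$), $z^-=\Omega^-(z)$ (resp. $z^+=\Omega^+(z)$) is the point of $\Lambda_0$ whose unstable (resp. stable) fiber contains $z$; these projections are equivariant: $\Omega^\pm(\Phi^t_0 z)=\Phi^t_0(\Omega^\pm z)$. $W^u(\Lambda_0)$ and $W^s(\Lambda_0)$ intersect transversally along a homoclinic channel $\Gamma_0$: a submanifold with $T_z\Gamma_0=T_zW^u\cap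 T_zW^s$, $T_zM=T_z\Gamma_0\oplus T_zW^u(z^-)\oplus T_zW^s(z^+)$, on which $\Omega^\pm$ are diffeomorphisms onto open sets $U^\pm\subset\Lambda_0$; the scattering map is $\sigma_0=\Omega^+\circ(\Omega^-|_{\Gamma_0})^{-1}:U^-\to U^+$, and for each $h$, $\Gamma_0\cap M_h$ consists of points $\Phi^t_0(z_0)$, $t$ in an interval containing $0$. Coordinates: $(I^u,\theta^u,y^u,x^u)$ are symplectic coordinates on a neighborhood of $W^u(\Lambda_0)$ and $(I^s,\theta^s,y^s,x^s)$ on a neighborhood of $W^s(\Lambda_0)$, both coinciding with the normal form coordinates $(I,\theta,y,x)$ near $\Lambda_0$ (where $\Lambda_0=\{x=y=0\}$ and $(I,\theta)$ restrict to the action-angle coordinates), with $I^u(z)=I^u(z^-)$, $\theta^u(z)=\theta^u(z^-)$ for $z\in W^u(\Lambda_0)$ and $I^s(z)=I^s(z^+)$, $\theta^s(z)=\theta^s(z^+)$ for $z\in W^s(\Lambda_0)$. *)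

(* Defs.v *)
From HB Require Import structures.
From mathcomp Require Import all_boot all_order all_algebra.
From mathcomp Require Import all_classical all_reals all_analysis.
Set Implicit Arguments. Unset Strict Implicit. Unset Printing Implicit Defensive.
Import Order.TTheory GRing.Theory Num.Theory.
Import numFieldNormedType.Exports.
Local Open Scope classical_set_scope.
Local Open Scope ring_scope.

(* Angles are represented by real numbers; equality of angles is equality
   modulo 2*pi (i.e. equality in R / 2 pi Z). *)
Definition angle_eq {R : realType} (a b : R) : Prop :=
  exists k : int, a - b = k%:~R * (2 * pi).

Definition unstable_fiber {R : realType} {M : pseudoMetricType R}
  (Phi : R -> M -> M) (x : M) : set M :=
  [set z | forall e : R, 0 < e ->
     exists T : R, forall t : R, t <= T -> ball (Phi t x) e (Phi t z)].

Definition stable_fiber {R : realType} {M : pseudoMetricType R}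
  (Phi : R -> M -> M) (x : M) : set M :=
  [set z | forall e : R, 0 < e ->
     exists T : R, forall t : R, T <= t -> ball (Phi t x) e (Phi t z)].

Definition unstable_manifold {R : realType} {M : pseudoMetricType R}
  (Phi : R -> M -> M) (Lam : set M) : set M :=
  \bigcup_(x in Lam) unstable_fiber Phi x.

Definition stable_manifold {R : realType} {M : pseudoMetricType R}
  (Phi : R -> M -> M) (Lam : set M) : set M :=
  \bigcup_(x in Lam) stable_fiber Phi x.

(* Graph of the scattering map sigma0 = Omega^+ o (Omega^- restricted to Gamma0)^{-1}
   : U^- -> U^+, where U^- = Omega^-(Gamma0). *)
Definition scattering_graph {R : realType} {M : pseudoMetricType R}
  (Gamma0 : set M) (Om Op : M -> M) (x y : M) : Prop :=
  exists z, Gamma0 z /\ Om z = x /\ Op z = y.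

Definition energy_level {R : realType} {M : Type} (H0 : M -> R) (h : R) : set M :=
  [set z | H0 z = h].

(* Main.v *)
Require Import Defs.
From HB Require Import structures.
From mathcomp Require Import all_boot all_order all_algebra.
From mathcomp Require Import all_classical all_reals all_analysis.
From mathcomp Require Import ring lra.
Import Order.TTheory GRing.Theory Num.Theory.
Import numFieldNormedType.Exports.
Local Open Scope classical_set_scope.
Local Open Scope ring_scope.

Lemma energy_eq (R : realType) (M : pseudoMetricType R) (H0 : M -> R)
  (Phi : R -> M -> M) (K : set M) (G : set_system R) (PG : ProperFilter G)
  (x z : M) :
  continuous H0 -> compact K -> (forall t, K (Phi t x)) ->
  (forall t, H0 (Phi t x) = H0 x) -> (forall t, H0 (Phi t z) = H0 z) ->
  (forall e, 0 < e -> G [set t | ball (Phi t x) e (Phi t z)]) ->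
  H0 z = H0 x.
Proof.
move=> Hc Kc KPhi Hx Hz Hb.
have key : forall eps, 0 < eps -> `|H0 z - H0 x| < eps + eps.
  move=> eps eps0.
  have FK : ((fun t => Phi t x) @ G) K by rewrite /fmap /=; apply: filterS filterT => t _ /=; exact: KPhi.
  have [p [Kp clp]] := Kc _ (fmap_proper_filter _ PG) FK.
  have nb : nbhs p [set q | `|H0 q - H0 p| < eps].
    have := Hc p. move/(_ [set y | `|y - H0 p| < eps]).
    apply. by apply/nbhs_ballP; exists eps => // y /= ; rewrite /ball /= distrC.
  have [r r0 sub] := (nbhs_ballP _ _).1 nb.
  have r20 : 0 < r / 2 by rewrite divr_gt0.
  have FA : ((fun t => Phi t x) @ G) [set q | exists t, ball (Phi t x) (r/2) (Phi t z) /\ q = Phi t x].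
    rewrite /fmap /=; apply: filterS (Hb _ r20) => t ht /=; by exists t.
  have [q [[t [bt ->]] bq]] := clp _ _ FA (nbhsx_ballx p (r/2) r20).
  have b1 : ball p r (Phi t z).
    by rewrite {1}(splitr r); apply: ball_triangle bq bt.
  have b2 : ball p r (Phi t x).
    apply: le_ball bq; have rp : 0 < r by exact: r0.
    lra.
  have := sub _ b1; have := sub _ b2; rewrite /= Hx Hz => h1 h2.
  have := ler_normB (H0 z - H0 p) (H0 x - H0 p).
  have -> : H0 z - H0 p - (H0 x - H0 p) = H0 z - H0 x by rewrite opprB addrA subrK.
  move=> h3. apply: le_lt_trans h3 _. by rewrite ltrD.
apply/eqP; rewrite -subr_eq0; apply/negPn/negP => hne.
have n0 : 0 < `|H0 z - H0 x| by rewrite normr_gt0.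
have := key (`|H0 z - H0 x| / 4) (divr_gt0 n0 (ltr0n _ 4)).
move: n0; set d := `|_|; move=> n0; lra.
Qed.

Theorem proposition4p5
  (R : realType) (M : pseudoMetricType R)
  (* Hamiltonian and its flow *)
  (H0 : M -> R) (Phi : R -> M -> M)
  (H0_cont : continuous H0)
  (Phi0 : forall z, Phi 0 z = z)
  (PhiD : forall s t z, Phi (s + t) z = Phi s (Phi t z))
  (H0_inv : forall t z, H0 (Phi t z) = H0 z)
  (* D = [a, b], family of Lyapunov orbits lambda0 h, Lambda0 = their union *)
  (a b : R) (lam0 : R -> set M) (Lam0 : set M)
  (Lam0_def : Lam0 = \bigcup_(h in `[a, b]) lam0 h)
  (Lam0_compact : compact Lam0)
  (lam0_level : forall h, h \in `[a, b] -> lam0 h `<=` energy_level H0 h)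
  (* action-angle coordinates (I, theta) on Lambda0 *)
  (I theta : M -> R) (Ih : R -> R)
  (lam0_I : forall h, h \in `[a, b] -> lam0 h = Lam0 `&` [set x | I x = Ih h])
  (chart_inj : forall x y, Lam0 x -> Lam0 y -> I x = I y ->
                 angle_eq (theta x) (theta y) -> x = y)
  (* the flow on each lambda0 h is a rigid rotation in theta *)
  (omega : R -> R)
  (lam0_inv : forall h t x, h \in `[a, b] -> lam0 h x -> lam0 h (Phi t x))
  (rot : forall h t x, h \in `[a, b] -> lam0 h x ->
           angle_eq (theta (Phi t x)) (theta x + omega h * t))
  (* projections Omega^- and Omega^+ along unstable / stable fibers *)
  (Om Op : M -> M)
  (Om_spec : forall z, unstable_manifold Phi Lam0 z ->
               Lam0 (Om z) /\ unstable_fiber Phi (Om z) z)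
  (Op_spec : forall z, stable_manifold Phi Lam0 z ->
               Lam0 (Op z) /\ stable_fiber Phi (Op z) z)
  (Om_equiv : forall t z, unstable_manifold Phi Lam0 z -> Om (Phi t z) = Phi t (Om z))
  (Op_equiv : forall t z, stable_manifold Phi Lam0 z -> Op (Phi t z) = Phi t (Op z))
  (* angle coordinates theta^u, theta^s *)
  (theta_u theta_s : M -> R)
  (theta_u_Lam : forall x, Lam0 x -> theta_u x = theta x)
  (theta_s_Lam : forall x, Lam0 x -> theta_s x = theta x)
  (theta_u_fib : forall z, unstable_manifold Phi Lam0 z -> theta_u z = theta_u (Om z))
  (theta_s_fib : forall z, stable_manifold Phi Lam0 z -> theta_s z = theta_s (Op z))
  (* homoclinic channel Gamma0 *)
  (Gamma0 : set M)
  (Gamma0_sub : Gamma0 `<=` unstable_manifold Phi Lam0 `&` stable_manifold Phi Lam0)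
  (Om_inj : {in Gamma0 &, injective Om})
  (Op_inj : {in Gamma0 &, injective Op})
  (Gamma0_orbit : forall h z0, h \in `[a, b] -> Gamma0 z0 -> H0 z0 = h ->
     exists J : set R, is_interval J /\ J 0 /\
       Gamma0 `&` energy_level H0 h = [set Phi t z0 | t in J]) :
  exists dtheta : R -> R,
    (* (i) the angle mismatch depends only on the energy level *)
    (forall h z0, h \in `[a, b] -> Gamma0 z0 -> H0 z0 = h ->
       angle_eq (theta_s z0 - theta_u z0) (dtheta h)) /\
    (* (ii) sigma0 (I, theta) = (I, theta + Delta(I)), Delta(I_h) = dtheta h *)
    (forall h x y, h \in `[a, b] -> scattering_graph Gamma0 Om Op x y ->
       I x = Ih h ->
       I y = I x /\ angle_eq (theta y) (theta x + dtheta h)).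
Proof.
have inLam : forall x, Lam0 x -> exists2 h, h \in `[a, b] & lam0 h x.
  by move=> x; rewrite Lam0_def => -[h hab hx]; exists h.
have LamO : forall x t, Lam0 x -> Lam0 (Phi t x).
  move=> x t /inLam [h hab hx]; rewrite Lam0_def; exists h => //.
  exact: lam0_inv.
have lamE : forall h x, h \in `[a, b] -> Lam0 x -> H0 x = h -> lam0 h x.
  move=> h x hab /inLam [h1 h1ab hx] Hx.
  have := lam0_level h1 h1ab _ hx; rewrite /energy_level /= Hx => ->; exact: hx.
have Em : forall z, unstable_manifold Phi Lam0 z -> H0 (Om z) = H0 z.
  move=> z /Om_spec [LO fib]; symmetry.
  apply: (@energy_eq R M H0 Phi Lam0 -oo%R proper_ninfty_nbhs (Om z) z) => //.
  - by move=> t; exact: LamO.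
  - move=> e e0; have [T hT] := fib e e0; exists T; split; first exact: num_real.
    by move=> t /ltW; apply: hT.
have Ep : forall z, stable_manifold Phi Lam0 z -> H0 (Op z) = H0 z.
  move=> z /Op_spec [LO fib]; symmetry.
  apply: (@energy_eq R M H0 Phi Lam0 +oo%R proper_pinfty_nbhs (Op z) z) => //.
  - by move=> t; exact: LamO.
  - move=> e e0; have [T hT] := fib e e0; exists T; split; first exact: num_real.
    by move=> t /ltW; apply: hT.
pose dth := fun h => match pselect (exists z, Gamma0 z /\ H0 z = h) with
  | left P => theta_s (proj1_sig (cid P)) - theta_u (proj1_sig (cid P))
  | right _ => 0 end.
have partI : forall h z0, h \in `[a, b] -> Gamma0 z0 -> H0 z0 = h ->
       angle_eq (theta_s z0 - theta_u z0) (dth h).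
  move=> h z0 hab Gz0 Hz0; rewrite /dth.
  case: pselect => [P|NP]; last by exfalso; apply: NP; exists z0.
  case: (cid P) => z [Gz Hz] /=.
  have [J [_ [_ eqJ]]] := Gamma0_orbit h z hab Gz Hz.
  have : (Gamma0 `&` energy_level H0 h) z0 by split.
  rewrite eqJ => -[t _ ezt]; rewrite -ezt in Gz0 *.
  have [um sm] := Gamma0_sub _ Gz.
  have [um0 sm0] := Gamma0_sub _ Gz0.
  have [LOm _] := Om_spec _ um.
  have [LOp _] := Op_spec _ sm.
  have lOm : lam0 h (Om z) by apply: lamE => //; rewrite Em.
  have lOp : lam0 h (Op z) by apply: lamE => //; rewrite Ep.
  have [k1 e1] := rot h t _ hab lOp.
  have [k2 e2] := rot h t _ hab lOm.
  exists (k1 - k2); rewrite intrB mulrBl -e1 -e2.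
  rewrite (theta_s_fib _ sm0) (theta_u_fib _ um0) Op_equiv // Om_equiv //.
  rewrite theta_s_Lam; last exact: LamO.
  rewrite theta_u_Lam; last exact: LamO.
  rewrite (theta_s_fib _ sm) (theta_u_fib _ um) theta_s_Lam // theta_u_Lam //.
  move: (theta (Phi t (Op z))) (theta (Phi t (Om z))) (theta (Op z)) (theta (Om z)) (omega h * t) => A B C D w; lra.
exists dth; split; first exact: partI.
move=> h x y hab [z [Gz [<- <-]]] Ix.
have [um sm] := Gamma0_sub _ Gz.
have [LOm _] := Om_spec _ um.
have [LOp _] := Op_spec _ sm.
have lOm : lam0 h (Om z) by rewrite lam0_I.
have HOm := lam0_level h hab _ lOm; rewrite /energy_level /= Em // in HOm.
have lOp : lam0 h (Op z) by apply: lamE => //; rewrite Ep.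
move: lOp; rewrite lam0_I // => -[_ /= ->]; split; first by rewrite Ix.
have [k ek] := partI h z hab Gz HOm.
exists k; rewrite -ek.
rewrite (theta_s_fib _ sm) (theta_u_fib _ um) theta_s_Lam // theta_u_Lam //.
move: (theta (Op z)) (theta (Om z)) (dth h) => A B C; lra.
Qed.
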